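(* Let $N\ge2$, let $B=\{(s_k,\tilde s_k)\}_{0\le k<N}$ be a Pauli frame, let $p\in\mathcal P$, and let $i\ne j$ be qubits such that $(\lambda(s_i,p),\lambda(\tilde s_i,p))\ne(0,0)$ and $(\lambda(s_j,p),\lambda(\tilde s_j,p))\ne(0,0)$. For $\sigma,\tau\in\{X,Y,Z\}$ let $C(\sigma,\tau)_{ij}=\tfrac12(I+\sigma_i)+\tfrac12(I-\sigma_i)\tau_j$. Then among the nine gates $C(\sigma,\tau)_{ij}$, exactly four satisfy $\mathrm{Supp}(p,C(\sigma,\tau)_{ij}\cdot B)=\mathrm{Supp}(p,B)-1$, and the other five satisfy $\mathrm{Supp}(p,C(\sigma,\tau)_{ij}\cdot B)=\mathrm{Supp}(p,B)$.
   Context: Pauli space: $\mathcal P$ is the set of $N$-qubit Pauli operators modulo overall phase, an $\mathbb F_2$-vector space with addition given by product (mod phase); $\lambda(p,q)\in\mathbb F_2$ is $0$ if $p,q$ commute and $1$ otherwise. A Pauli frame is an ordered tuple $B=\{(s_k,\tilde s_k)\}_{0\le k<N}$ of elements of $\mathcal P$ with $\lambda(s_k,s_l)=\lambda(\tilde s_k,\tilde s_l)=0$, $\lambda(s_k,\tilde s_l)=\delta_{kl}$. For a frame $B$ let $\phi_B$ be the linear map of $\mathcal P$ with $\phi_B(Z_k)=s_k$, $\phi_B(X_k)=\tilde s_k$. The backward action of a Clifford unitary $V$ on $B$ is $V\cdot B:=\{(\phi_B(V^\dagger Z_kV),\phi_B(V^\dagger X_kV))\}_k$ (mod phase). Relative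 support: $\mathrm{Supp}(p,B)=\sum_k\big(\lambda(s_k,p)\vee\lambda(\tilde s_k,p)\big)$, with $\vee$ the logical OR and the sum over integers. *)

(* Defs.v *)
From mathcomp Require Import all_boot.
Set Implicit Arguments. Unset Strict Implicit. Unset Printing Implicit Defensive.

(* An N-qubit Pauli operator modulo phase is X^x Z^z (tensor over qubits),
   encoded by its bits (x_k, z_k) for each qubit k. *)
Definition Pauli (N : nat) := {ffun 'I_N -> bool * bool}.

Definition padd N (p q : Pauli N) : Pauli N :=
  [ffun k => (xorb (p k).1 (q k).1, xorb (p k).2 (q k).2)].
Definition pid N : Pauli N := [ffun _ => (false, false)].

Definition single N (k : 'I_N) (a : bool * bool) : Pauli N :=
  [ffun l => if l == k then a else (false, false)].
Definition Zop N (k : 'I_N) : Pauli N := single k (false, true).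
Definition Xop N (k : 'I_N) : Pauli N := single k (true, false).

(* lambda(p,q) : false (=0) iff p, q commute *)
Definition lam N (p q : Pauli N) : bool :=
  \big[addb/false]_(k < N) (((p k).1 && (q k).2) (+) ((p k).2 && (q k).1)).

Record frame (N : nat) := Frame { fs : 'I_N -> Pauli N; fst : 'I_N -> Pauli N }.

Definition is_frame N (B : frame N) : Prop :=
  forall k l : 'I_N,
    lam (fs B k) (fs B l) = false /\ lam (fst B k) (fst B l) = false /\
    lam (fs B k) (fst B l) = (k == l).

(* the linear map phi_B with phi_B(Z_k) = s_k, phi_B(X_k) = st_k *)
Definition phi N (B : frame N) (q : Pauli N) : Pauli N :=
  \big[@padd N/pid N]_(k < N)
     padd (if (q k).1 then fst B k else pid N) (if (q k).2 then fs B k else pid N).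

(* The three nontrivial single-qubit Paulis, indexed by 'I_3:
   0 = X, 1 = Y, 2 = Z, as (x,z) bits. *)
Definition pauli1 (a : 'I_3) : bool * bool :=
  match val a with 0 => (true, false) | 1 => (true, true) | _ => (false, true) end.

(* Conjugation V^dagger P V (mod phase) of a Pauli P by the Clifford gate
   V = C(sigma,tau)_{ij} = 1/2 (I + sigma_i) + 1/2 (I - sigma_i) tau_j.
   V is Hermitian and V^dagger P V = P * sigma_i^{lam(P,tau_j)} * tau_j^{lam(P,sigma_i)}
   up to phase. *)
Definition Cconj N (sg tau : 'I_3) (i j : 'I_N) (P : Pauli N) : Pauli N :=
  let si := single i (pauli1 sg) in
  let tj := single j (pauli1 tau) in
  padd P (padd (if lam P tj then si else pid N) (if lam P si then tj else pid N)).

Definition Cact N (sg tau : 'I_3) (i j : 'I_N) (B : frame N) : frame N :=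
  Frame (fun k => phi B (Cconj sg tau i j (Zop k)))
        (fun k => phi B (Cconj sg tau i j (Xop k))).

Definition Supp N (p : Pauli N) (B : frame N) : nat :=
  \sum_(k < N) ((lam (fs B k) p) || (lam (fst B k) p)).

(* Main.v *)
Require Import Defs.
From mathcomp Require Import all_boot zify.
Set Implicit Arguments. Unset Strict Implicit. Unset Printing Implicit Defensive.
Definition sym (a b : bool*bool) := (a.1 && b.2) (+) (a.2 && b.1).
Definition wv N (B : frame N) (p : Pauli N) k := (lam (fs B k) p, lam (fst B k) p).
Definition L N (B : frame N) (p q : Pauli N) :=
  \big[addb/false]_(l < N) sym (q l) (wv B p l).

Lemma lam_padd N (q r x : Pauli N) : lam (padd q r) x = lam q x (+) lam r x.
Proof.
rewrite /lam -big_split /=; apply eq_bigr => k _; rewrite ffunE /=.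
by case: (q k) => [[] []]; case: (r k) => [[] []]; case: (x k) => [[] []].
Qed.
Lemma lam_pid N (x : Pauli N) : lam (pid N) x = false.
Proof. by rewrite /lam big1 // => k _; rewrite ffunE. Qed.

Lemma L_padd N B p (q r : Pauli N) : L B p (padd q r) = L B p q (+) L B p r.
Proof.
rewrite /L -big_split /=; apply eq_bigr => k _; rewrite ffunE /sym.
by move: (q k) (r k) (wv B p k) => [[] []] [[] []] [[] []].
Qed.
Lemma L_pid N B p : L B p (pid N) = false.
Proof. by rewrite /L big1 // => k _; rewrite ffunE. Qed.
Lemma L_if N B p c (x : Pauli N) : L B p (if c then x else pid N) = c && L B p x.
Proof. by case: c; rewrite ?L_pid. Qed.
Lemma L_single N B p (k : 'I_N) a : L B p (single k a) = sym a (wv B p k).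
Proof.
rewrite /L (bigD1 k) //= big1 ?addbF ?ffunE ?eqxx // => l /negbTE nl.
by rewrite ffunE nl.
Qed.
Lemma lam_single N (k l : 'I_N) a b : lam (single k a) (single l b) = (k == l) && sym a b.
Proof.
case: (eqVneq k l) => [<-|ne].
  rewrite /lam (bigD1 k) //= big1 ?addbF ?ffunE ?eqxx // => m /negbTE nm.
  by rewrite !ffunE nm.
rewrite /lam big1 // => m _; rewrite !ffunE.
case: ifP => [/eqP mk|_]; case: ifP => [/eqP ml|_] //=; rewrite ?andbF //.
by move: ne; rewrite -mk -ml eqxx.
Qed.
Lemma lam_phi N (B : frame N) p q : lam (phi B q) p = L B p q.
Proof.
rewrite /phi (big_morph (fun x => lam x p) (fun q r => lam_padd q r p) (lam_pid p)).
apply eq_bigr => k _; rewrite lam_padd /sym /wv /=.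
by case: (q k) => [[] []] /=; rewrite ?lam_pid ?addbF.
Qed.
Lemma L_Cconj N B p sg tau (i j k : 'I_N) a :
  L B p (Cconj sg tau i j (single k a)) =
  sym a (wv B p k) (+) (((k == j) && sym a (pauli1 tau)) && sym (pauli1 sg) (wv B p i))
   (+) (((k == i) && sym a (pauli1 sg)) && sym (pauli1 tau) (wv B p j)).
Proof. by rewrite /Cconj !L_padd !L_if !lam_single !L_single addbA. Qed.
Lemma card9 (P : pred ('I_3*'I_3)) : #|[set g | P g]| = \sum_(a<3)\sum_(b<3) P (a,b).
Proof.
rewrite cardsE -sum1_card pair_bigA big_mkcond; apply eq_bigr => -[a b] _ /=.
by rewrite unfold_in; case: (P (a,b)).
Qed.
Definition Gi (sg tau : 'I_3) wi wj :=
  (sym (false,true) wi (+) (sym (false,true) (pauli1 sg) && sym (pauli1 tau) wj)) ||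
  (sym (true,false) wi (+) (sym (true,false) (pauli1 sg) && sym (pauli1 tau) wj)).
Definition Gj (sg tau : 'I_3) wi wj :=
  (sym (false,true) wj (+) (sym (false,true) (pauli1 tau) && sym (pauli1 sg) wi)) ||
  (sym (true,false) wj (+) (sym (true,false) (pauli1 tau) && sym (pauli1 sg) wi)).
Lemma fin (wi wj : bool*bool) : wi != (false,false) -> wj != (false,false) ->
  #|[set g : 'I_3 * 'I_3 | Gi g.1 g.2 wi wj + Gj g.1 g.2 wi wj == 1]| = 4 /\
  #|[set g : 'I_3 * 'I_3 | Gi g.1 g.2 wi wj + Gj g.1 g.2 wi wj == 2]| = 5.
Proof.
case: wi => [[] []]; case: wj => [[] []] => // _ _; split; rewrite card9 !big_ord_recr !big_ord0 /=; reflexivity.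
Qed.
Lemma sum_split N (F : 'I_N -> nat) (i j : 'I_N) : i != j ->
  \sum_k F k = F i + F j + \sum_(k | (k != i) && (k != j)) F k.
Proof. by move=> hij; rewrite (bigD1 i) // (bigD1 j) /= 1?eq_sym // addnA. Qed.

Lemma SuppC N (B : frame N) p sg tau (i j : 'I_N) : i != j ->
  Supp p (Cact sg tau i j B) = Gi sg tau (wv B p i) (wv B p j) + Gj sg tau (wv B p i) (wv B p j)
    + \sum_(k | (k != i) && (k != j)) (lam (fs B k) p || lam (fst B k) p).
Proof.
move=> hij; rewrite /Supp (sum_split _ hij) /= /Zop /Xop !lam_phi !L_Cconj.
have hji : (j == i) = false by rewrite eq_sym (negbTE hij).
rewrite (negbTE hij) hji !eqxx /= !addbF; congr (_ + _).
apply eq_bigr => k /andP[ki kj]; rewrite !lam_phi !L_Cconj (negbTE ki) (negbTE kj) /= !addbF.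
by rewrite /sym /wv /=; case: (lam (fs B k) p); case: (lam (fst B k) p).
Qed.

Lemma SuppB N (B : frame N) p (i j : 'I_N) : i != j ->
  (lam (fs B i) p, lam (fst B i) p) != (false, false) ->
  (lam (fs B j) p, lam (fst B j) p) != (false, false) ->
  Supp p B = 1 + 1 + \sum_(k | (k != i) && (k != j)) (lam (fs B k) p || lam (fst B k) p).
Proof.
move=> hij hi hj; rewrite /Supp (sum_split _ hij).
by move: hi hj; case: (lam (fs B i) p); case: (lam (fst B i) p);
  case: (lam (fs B j) p); case: (lam (fst B j) p).
Qed.

Theorem mainTheorem6 (N : nat) (hN : 2 <= N) (B : frame N) (hB : is_frame B)
  (p : Pauli N) (i j : 'I_N) (hij : i != j)
  (hi : (lam (fs B i) p, lam (fst B i) p) != (false, false))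
  (hj : (lam (fs B j) p, lam (fst B j) p) != (false, false)) :
  #|[set g : 'I_3 * 'I_3 | Supp p (Cact g.1 g.2 i j B) == (Supp p B).-1]| = 4 /\
  #|[set g : 'I_3 * 'I_3 | Supp p (Cact g.1 g.2 i j B) == Supp p B]| = 5.
Proof.
have [H1 H2] := fin hi hj.
set R := \sum_(k | (k != i) && (k != j)) (lam (fs B k) p || lam (fst B k) p).
have EB := SuppB hij hi hj.
split.
  rewrite -H1; apply eq_card => g; rewrite !inE (SuppC _ _ _ _ hij) EB -/R.
  by apply/eqP/eqP => /= H; rewrite /wv in H *; lia.
rewrite -H2; apply eq_card => g; rewrite !inE (SuppC _ _ _ _ hij) EB -/R.
by apply/eqP/eqP => /= H; rewrite /wv in H *; lia.
Qed.
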